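(* Consider online gradient descent $A$ on a finite-dimensional space with learning rates $\eta_t$ such that $\sum_{t=1}^T\eta_t=O(\rho_1(T))$. If $R_0(A)=O(\rho_2(T))$, then $R'_0(A)=O(\rho_1(T)+\rho_2(T))$.
   Context: The decision space $F\subseteq(\mathbb{R}^+)^n$ is non-empty, convex, bounded and closed; $\|\cdot\|$ is a seminorm on $\mathbb{R}^n$; cost functions $c^t:F\to\mathbb{R}^+$ are convex with (sub)gradients whose Euclidean norms $\|\nabla c^t(\cdot)\|_2$ are uniformly bounded over the sequence. Online gradient descent (OGD) with learning rates $\eta_t$: select an arbitrary $x^1\in F$, and at each step $t\ge1$ set $x^{t+1}=P(x^t-\eta_t\nabla c^t(x^t))$, where $P(y)=\arg\min_{x\in F}\|x-y\|_2$ is the Euclidean projection onto $F$; here $x^t$ is chosen before $c^t$ is revealed. With $x^0=0$, $C_0^\alpha(A)=\sum_{t=1}^T c^t(x^t)+\alpha\|x^t-x^{t-1}\|$ and $OPT_s=\min_{x\in F}\sum_{t=1}^Tc^t(x)$. The regret $R_0(A)$ is (at most) $\rho(T)$ if $C_0^0(A)-OPT_s\le\rho(T)$ for every admissible cost sequence, and $R'_0(A)$ is defined the same way with $C_0^1(A)$ in place of $C_0^0(A)$. *)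

(* Defs.v *)
From mathcomp Require Import all_boot all_order all_algebra.
From mathcomp Require Import all_classical all_reals all_analysis.
Set Implicit Arguments. Unset Strict Implicit. Unset Printing Implicit Defensive.
Import Order.TTheory GRing.Theory Num.Theory.
Local Open Scope classical_set_scope.
Local Open Scope ring_scope.

Section OGD.
Variables (R : realType) (n : nat).
Local Notation V := 'rV[R]_n.

Definition dot (x y : V) : R := \sum_(i < n) x 0 i * y 0 i.
Definition norm2 (x : V) : R := Num.sqrt (dot x x).

Definition is_seminorm (N : V -> R) : Prop :=
  (forall x y, N (x + y) <= N x + N y) /\ (forall (a : R) x, N (a *: x) = `|a| * N x).

Definition convex_subset (F : set V) : Prop :=
  forall x y (l : R), F x -> F y -> 0 <= l <= 1 -> F (l *: x + (1 - l) *: y).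

Definition decision_space (F : set V) : Prop :=
  [/\ F !=set0, convex_subset F, bounded_set (F : set 'rV[R^o]_n),
      closed (F : set 'rV[R^o]_n)
    & forall x, F x -> forall i, 0 <= x 0 i].

Definition convex_on (F : set V) (c : V -> R) : Prop :=
  forall x y (l : R), F x -> F y -> 0 <= l <= 1 ->
    c (l *: x + (1 - l) *: y) <= l * c x + (1 - l) * c y.

Definition subgradient (F : set V) (c : V -> R) (x g : V) : Prop :=
  forall y, F y -> c x + dot g (y - x) <= c y.

Definition admissible (F : set V) (G : R) (c : nat -> V -> R) (g : nat -> V -> V) :
  Prop :=
  forall t, (1 <= t)%N ->
    [/\ forall x, F x -> 0 <= c t x,
        convex_on F (c t),
        forall x, F x -> subgradient F (c t) x (g t x)
      & forall x, F x -> norm2 (g t x) <= G].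

Definition is_proj (F : set V) (y p : V) : Prop :=
  F p /\ forall z, F z -> norm2 (p - y) <= norm2 (z - y).

(* x is the run of OGD with learning rates eta, start x1, on feedback g;
   x 0 = 0 is the convention x^0 = 0. *)
Definition ogd_run (F : set V) (eta : nat -> R) (x1 : V) (g : nat -> V -> V)
    (x : nat -> V) : Prop :=
  [/\ x 0%N = 0, x 1%N = x1
    & forall t, (1 <= t)%N -> is_proj F (x t - eta t *: g t (x t)) (x t.+1)].

Definition cost (N : V -> R) (alpha : R) (c : nat -> V -> R) (x : nat -> V) (T : nat)
  : R := \sum_(1 <= t < T.+1) (c t (x t) + alpha * N (x t - x t.-1)).

Definition static_cost (c : nat -> V -> R) (T : nat) (y : V) : R :=
  \sum_(1 <= t < T.+1) c t y.

(* The (worst-case) regret of OGD w.r.t. C_0^alpha is O(rho(T)):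
   there are constants K, T0 such that for all T >= T0 and every admissible
   cost sequence, C_0^alpha(A) - OPT_s <= K * rho T.  (C - OPT_s <= b is written
   as C - sum_t c^t(y) <= b for every y in F, OPT_s being the minimum.) *)
Definition ogd_regret_bigO (F : set V) (N : V -> R) (G : R) (eta : nat -> R) (x1 : V)
    (alpha : R) (rho : nat -> R) : Prop :=
  exists (K : R) (T0 : nat), forall T, (T0 <= T)%N ->
    forall c g x, admissible F G c g -> ogd_run F eta x1 g x ->
      forall y, F y -> cost N alpha c x T - static_cost c T y <= K * rho T.

End OGD.

Definition seq_bigO (R : realType) (f rho : nat -> R) : Prop :=
  exists (K : R) (T0 : nat), forall T, (T0 <= T)%N -> f T <= K * rho T.

(* Main.v *)
Require Import Defs.
From mathcomp Require Import all_boot all_order all_algebra.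
From mathcomp Require Import all_classical all_reals all_analysis.
From mathcomp Require Import ring lra.
Import Order.TTheory GRing.Theory Num.Theory.
Local Open Scope classical_set_scope.
Local Open Scope ring_scope.

Lemma sn0 (R : realType) (n : nat) (N : 'rV[R]_n -> R) :
  is_seminorm N -> N 0 = 0.
Proof. by case=> _ h; rewrite -(scale0r (0 : 'rV[R]_n)) h normr0 mul0r. Qed.

Lemma snN (R : realType) (n : nat) (N : 'rV[R]_n -> R) :
  is_seminorm N -> forall v, N (- v) = N v.
Proof. by case=> _ h v; rewrite -scaleN1r h normrN normr1 mul1r. Qed.

Lemma sn_ge0 (R : realType) (n : nat) (N : 'rV[R]_n -> R) :
  is_seminorm N -> forall v, 0 <= N v.
Proof.
move=> hN v; have := (proj1 hN) v (- v).
rewrite subrr sn0 // snN // => h.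
have : 0 <= N v *+ 2 by rewrite mulr2n.
by rewrite pmulrn_lge0.
Qed.

Lemma norm2_ge_coord (R : realType) (n : nat) (v : 'rV[R]_n) i :
  `|v 0 i| <= norm2 v.
Proof.
rewrite /norm2 /dot -sqrtr_sqr ler_sqrt; last by apply: sumr_ge0 => j _; rewrite -expr2 sqr_ge0.
rewrite (bigD1 i) //= -expr2 lerDl; apply: sumr_ge0 => j _; by rewrite -expr2 sqr_ge0.
Qed.

Lemma norm2Z (R : realType) (n : nat) (a : R) (v : 'rV[R]_n) :
  norm2 (a *: v) = `|a| * norm2 v.
Proof.
rewrite /norm2 /dot.
have -> : \sum_(i < n) (a *: v) 0 i * (a *: v) 0 i = a ^+ 2 * \sum_(i < n) v 0 i * v 0 i.
  rewrite mulr_sumr; apply: eq_bigr => i _; rewrite !mxE; ring.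
by rewrite sqrtrM ?sqr_ge0 // sqrtr_sqr.
Qed.

Lemma norm2N (R : realType) (n : nat) (v : 'rV[R]_n) : norm2 (- v) = norm2 v.
Proof. by rewrite -scaleN1r norm2Z normrN normr1 mul1r. Qed.

Lemma sn_bound (R : realType) (n : nat) (N : 'rV[R]_n -> R) :
  is_seminorm N -> forall v, N v <= norm2 v * \sum_(j < n) N 'e_j.
Proof.
move=> hN v; rewrite {1}(row_sum_delta v) mulr_sumr.
apply: (@le_trans _ _ (\sum_(j < n) N (v 0 j *: 'e_j))).
  elim/big_rec2: _ => [|j y1 y2 _ IH]; first by rewrite sn0.
  by apply: le_trans ((proj1 hN) _ _) _; rewrite lerD2l.
apply: ler_sum => j _; rewrite (proj2 hN) ler_wpM2r //; first exact: sn_ge0.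
exact: norm2_ge_coord.
Qed.

Lemma eta_sum_ge0 (R : realType) (eta : nat -> R) a b :
  (forall t, (1 <= t)%N -> 0 < eta t) -> (1 <= a)%N ->
  0 <= \sum_(a <= t < b) eta t.
Proof.
move=> he ha; rewrite big_nat_cond; apply: sumr_ge0 => i /andP[/andP[hi _] _].
by apply/ltW/he; apply: leq_trans hi.
Qed.

Theorem proposition1 (R : realType) (n : nat) (F : set 'rV[R]_n)
    (N : 'rV[R]_n -> R) (G : R) (eta : nat -> R) (x1 : 'rV[R]_n)
    (rho1 rho2 : nat -> R) :
  decision_space F -> is_seminorm N -> F x1 ->
  (forall t, (1 <= t)%N -> 0 < eta t) ->
  (forall T, 0 <= rho1 T) -> (forall T, 0 <= rho2 T) ->
  seq_bigO (fun T => \sum_(1 <= t < T.+1) eta t) rho1 ->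
  ogd_regret_bigO F N G eta x1 0 rho2 ->
  ogd_regret_bigO F N G eta x1 1 (fun T => rho1 T + rho2 T).
Proof.
move=> hF hN Fx1 etapos rho1p rho2p [K1 [T1 hK1]] [K2 [T2 hK2]].
set C := \sum_(j < n) N 'e_j.
have C0 : 0 <= C by apply: sumr_ge0 => j _; exact: sn_ge0.
set D := 2 * C * `|G|.
have D0 : 0 <= D by rewrite /D !mulr_ge0.
set A := N x1 / eta 1%N + D.
have A0 : 0 <= A by rewrite /A addr_ge0 // divr_ge0 ?sn_ge0 // ltW // etapos.
exists (`|K2| + `|A * K1|), (maxn (maxn T1 T2) 1).
move=> T hT c g x hadm hrun y Fy.
have hT1 : (T1 <= T)%N by move: hT; rewrite !geq_max => /andP[/andP[]].
have hT2 : (T2 <= T)%N by move: hT; rewrite !geq_max => /andP[/andP[]].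
have hT0 : (1 <= T)%N by move: hT; rewrite !geq_max => /andP[].
case: hrun => x0 ex1 hproj.
have Fx : forall t, (1 <= t)%N -> F (x t).
  elim=> [//|t IH] _; case: t IH => [|t] IH; first by rewrite ex1.
  by case: (hproj t.+1 isT).
have step : forall t, (1 <= t)%N -> N (x t.+1 - x t) <= D * eta t.
  move=> t ht; case: (hproj t ht) => _ hp.
  set yy := x t - eta t *: g t (x t).
  have -> : x t.+1 - x t = (x t.+1 - yy) + (yy - x t) by rewrite addrA subrK.
  apply: le_trans ((proj1 hN) _ _) _.
  have e1 : yy - x t = - (eta t *: g t (x t)) by rewrite /yy addrAC subrr add0r.
  have e2 : x t - yy = eta t *: g t (x t) by rewrite /yy opprB addrC subrK.
  have hg : norm2 (g t (x t)) <= `|G|.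
    case: (hadm t ht) => _ _ _ hb; apply: le_trans (hb _ (Fx t ht)) _; exact: ler_norm.
  have hyy : norm2 (yy - x t) <= eta t * `|G|.
    rewrite e1 norm2N norm2Z gtr0_norm ?etapos //; apply: ler_wpM2l => //.
    exact/ltW/etapos.
  have hx : norm2 (x t.+1 - yy) <= eta t * `|G|.
    apply: le_trans (hp _ (Fx t ht)) _; rewrite -opprB norm2N; exact: hyy.
  have b1 := @sn_bound _ _ N hN (x t.+1 - yy).
  have b2 := @sn_bound _ _ N hN (yy - x t).
  have c1 : norm2 (x t.+1 - yy) * C <= eta t * `|G| * C by rewrite ler_wpM2r.
  have c2 : norm2 (yy - x t) * C <= eta t * `|G| * C by rewrite ler_wpM2r.
  rewrite /D; apply: le_trans (lerD (le_trans b1 c1) (le_trans b2 c2)) _.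
  by rewrite le_eqVlt; apply/orP; left; apply/eqP; ring.
have sw : forall T, (1 <= T)%N ->
    \sum_(1 <= t < T.+1) N (x t - x t.-1) <= N x1 + D * \sum_(1 <= t < T) eta t.
  elim=> [//|T' IH] _; case: T' IH => [|T'] IH.
    by rewrite big_nat1 big_geq // mulr0 addr0 x0 ex1 subr0.
  rewrite (big_nat_recr T'.+2) //= [X in _ <= _ + D * X]big_nat_recr //= mulrDr addrA.
  by apply: lerD; [exact: IH | exact: step].
have decomp : cost N 1 c x T = cost N 0 c x T + \sum_(1 <= t < T.+1) N (x t - x t.-1).
  rewrite /cost -big_split /=; apply: eq_bigr => t _; by rewrite mul0r mul1r addr0.
set S := \sum_(1 <= t < T.+1) eta t.
have hS1 : \sum_(1 <= t < T) eta t <= S.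
  rewrite /S big_nat_recr //= lerDl; exact/ltW/etapos.
have hSe : eta 1%N <= S.
  rewrite /S big_ltn // lerDl; exact: eta_sum_ge0.
have eta10 : 0 < eta 1%N by exact: etapos.
have hNx : N x1 <= N x1 / eta 1%N * S.
  have h := ler_wpM2l (divr_ge0 (@sn_ge0 _ _ N hN x1) (ltW eta10)) hSe.
  by rewrite mulfVK ?gt_eqF // in h.
have hc0 := hK2 T hT2 c g x hadm (And3 x0 ex1 hproj) y Fy.
have hs := hK1 T hT1.
rewrite decomp addrAC.
apply: le_trans (lerD hc0 (sw T hT0)) _.
have e3 : N x1 + D * \sum_(1 <= t < T) eta t <= A * S.
  rewrite /A mulrDl; apply: lerD => //; exact: ler_wpM2l.
apply: le_trans (lerD (lexx _) e3) _.
have e4 : A * S <= `|A * K1| * rho1 T.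
  apply: le_trans (ler_wpM2l A0 hs) _; rewrite mulrA ler_wpM2r //; exact: ler_norm.
have e5 : K2 * rho2 T <= `|K2| * rho2 T by rewrite ler_wpM2r // ler_norm.
apply: le_trans (lerD e5 e4) _.
rewrite /=.
have : 0 <= `|K2| * rho1 T + `|A * K1| * rho2 T by rewrite addr_ge0 // mulr_ge0.
lra.
Qed.
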